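(* Let $\mathbb{D}$ be $[0,1]^2$ or a mesh and let $A,B:\mathbb{D}\to\mathbb{R}$ satisfy (Q1) $A\le B$ and (Q2) $L^{(A,B)}(R)\ge0$ for all $R\in\mathfrak{R}$. Then for all $\mathbf{x}\in\mathbb{D}$, $$P_M^{(A,B)}(\mathbf{x})+P_O^{(A,B)}(\mathbf{x})\ge B(\mathbf{x})-A(\mathbf{x}).$$
   Context: A rectangle is $[s_1,s_2]\times[t_1,t_2]$ with $s_1<s_2$, $t_1<t_2$ and corners in $\mathbb{D}$; main corners: southwest and northeast; opposite corners: southeast and northwest. $\mathfrak{R}$ is the set of finite formal unions $R=R_1\sqcup\dots\sqcup R_n$ of rectangles (repetitions allowed), with multiplicity $m_R(\mathbf{y})=\sum_i m_{R_i}(\mathbf{y})$, where $m_{R_i}(\mathbf{y})$ is $1$ at main corners, $-1$ at opposite corners, $0$ elsewhere. $L^{(A,B)}(R)=\sum_{m_R(\mathbf{y})>0}B(\mathbf{y})m_R(\mathbf{y})+\sum_{m_R(\mathbf{y})<0}A(\mathbf{y})m_R(\mathbf{y})$; $P_M^{(A,B)}(\mathbf{x})=\inf\{L^{(A,B)}(R)/m_R(\mathbf{x}):m_R(\mathbf{x})>0\}$; $P_O^{(A,B)}(\mathbf{x})=\inf\{L^{(A,B)}(R)/(-m_R(\mathbf{x})):m_R(\mathbf{x})<0\}$, infima over $R\in\mathfrak{R}$ and $\inf\emptyset=+\infty$. *)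

(* Defs.v *)
From Stdlib Require Import Reals Lra List Classical ClassicalEpsilon.
Import ListNotations.
Open Scope R_scope.

Definition pt := (R * R)%type.

Definition pt_eq_dec : forall x y : pt, {x = y} + {x <> y}.
Proof.
  intros [a b] [c d].
  destruct (Req_EM_T a c) as [H1|H1]; destruct (Req_EM_T b d) as [H2|H2];
    subst; auto; right; intros H; inversion H; auto.
Defined.

Definition unit_square (p : pt) : Prop :=
  0 <= fst p <= 1 /\ 0 <= snd p <= 1.

Definition is_mesh (D : pt -> Prop) : Prop :=
  exists l1 l2 : list R,
    (forall s, In s l1 -> 0 <= s <= 1) /\ In 0 l1 /\ In 1 l1 /\
    (forall t, In t l2 -> 0 <= t <= 1) /\ In 0 l2 /\ In 1 l2 /\
    (forall p : pt, D p <-> (In (fst p) l1 /\ In (snd p) l2)).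

Definition square_or_mesh (D : pt -> Prop) : Prop :=
  (forall p, D p <-> unit_square p) \/ is_mesh D.

Record rect := mkRect { rs1 : R; rs2 : R; rt1 : R; rt2 : R }.

Definition rect_ok (D : pt -> Prop) (r : rect) : Prop :=
  rs1 r < rs2 r /\ rt1 r < rt2 r /\
  D (rs1 r, rt1 r) /\ D (rs2 r, rt2 r) /\ D (rs2 r, rt1 r) /\ D (rs1 r, rt2 r).

(* Formal unions of rectangles (repetitions allowed) *)
Definition runion := list rect.

Definition runion_ok (D : pt -> Prop) (Rs : runion) : Prop := Forall (rect_ok D) Rs.

Definition m_rect (r : rect) (y : pt) : R :=
  if pt_eq_dec y (rs1 r, rt1 r) then 1
  else if pt_eq_dec y (rs2 r, rt2 r) then 1
  else if pt_eq_dec y (rs2 r, rt1 r) then -1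
  else if pt_eq_dec y (rs1 r, rt2 r) then -1
  else 0.

Definition mult (Rs : runion) (y : pt) : R :=
  fold_right (fun r acc => m_rect r y + acc) 0 Rs.

Definition corners (r : rect) : list pt :=
  [(rs1 r, rt1 r); (rs2 r, rt2 r); (rs2 r, rt1 r); (rs1 r, rt2 r)].

(* All points where some rectangle of the union has a corner (without
   duplicates); m_R vanishes off this finite set. *)
Definition all_corners (Rs : runion) : list pt :=
  nodup pt_eq_dec (flat_map corners Rs).

Definition Lterm (A B : pt -> R) (Rs : runion) (y : pt) : R :=
  let m := mult Rs y in
  if Rlt_dec 0 m then B y * m
  else if Rlt_dec m 0 then A y * m
  else 0.

Definition L (A B : pt -> R) (Rs : runion) : R :=
  fold_right (fun y acc => Lterm A B Rs y + acc) 0 (all_corners Rs).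

(* Extended reals, for infima (inf of the empty set = +infinity) *)
Inductive Rbar := Fin (r : R) | PInf | MInf.

Definition Rbar_le (a b : Rbar) : Prop :=
  match a, b with
  | MInf, _ => True
  | _, PInf => True
  | Fin x, Fin y => x <= y
  | _, _ => False
  end.

(* addition; +infinity absorbs (the case +inf + -inf does not occur under
   the hypotheses of the theorem, since then all infima are >= 0) *)
Definition Rbar_plus (a b : Rbar) : Rbar :=
  match a, b with
  | PInf, _ | _, PInf => PInf
  | MInf, _ | _, MInf => MInf
  | Fin x, Fin y => Fin (x + y)
  end.

Definition is_inf (S : R -> Prop) (l : Rbar) : Prop :=
  (forall x, S x -> Rbar_le l (Fin x)) /\
  (forall l', (forall x, S x -> Rbar_le l' (Fin x)) -> Rbar_le l' l).

(* the infimum, chosen classically (it exists by completeness of R) *)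
Definition Inf (S : R -> Prop) : Rbar :=
  epsilon (inhabits PInf) (is_inf S).

Definition P_M (D : pt -> Prop) (A B : pt -> R) (x : pt) : Rbar :=
  Inf (fun v => exists Rs, runion_ok D Rs /\ 0 < mult Rs x /\
                            v = L A B Rs / mult Rs x).

Definition P_O (D : pt -> Prop) (A B : pt -> R) (x : pt) : Rbar :=
  Inf (fun v => exists Rs, runion_ok D Rs /\ mult Rs x < 0 /\
                            v = L A B Rs / (- mult Rs x)).

(* Main.v *)
Require Import Defs.
From Stdlib Require Import Reals List Lra Lia ZArith Classical ClassicalEpsilon.
Open Scope R_scope.

Definition sumL (f : pt -> R) (l : list pt) : R :=
  fold_right (fun y acc => f y + acc) 0 l.

Definition phi (a b m : R) : R :=
  if Rlt_dec 0 m then b * m else if Rlt_dec m 0 then a * m else 0.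

Lemma Lterm_phi A B Rs y : Lterm A B Rs y = phi (A y) (B y) (mult Rs y).
Proof. reflexivity. Qed.

Lemma phi_scale a b k m : 0 <= k -> phi a b (k * m) = k * phi a b m.
Proof.
  intros Hk; unfold phi.
  destruct (Rlt_dec 0 (k*m)); destruct (Rlt_dec 0 m);
  destruct (Rlt_dec (k*m) 0); destruct (Rlt_dec m 0); try nra.
  all: destruct (Rle_lt_or_eq_dec 0 k Hk); [nra|subst; nra].
Qed.

Lemma phi_sub a b u v : a <= b -> phi a b (u + v) <= phi a b u + phi a b v.
Proof.
  intros H; unfold phi.
  destruct (Rlt_dec 0 (u+v)); destruct (Rlt_dec 0 u); destruct (Rlt_dec 0 v);
  destruct (Rlt_dec (u+v) 0); destruct (Rlt_dec u 0); destruct (Rlt_dec v 0);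
  try nra.
  all: try (assert (v = 0) by lra; subst v; nra).
  all: try (assert (u = 0) by lra; subst u; nra).
  all: assert (v = -u) by lra; subst v; nra.
Qed.

Lemma phi_zero a b : phi a b 0 = 0.
Proof. unfold phi; destruct (Rlt_dec 0 0); [lra|]; destruct (Rlt_dec 0 0); lra. Qed.

Lemma mult_app l1 l2 y : mult (l1 ++ l2) y = mult l1 y + mult l2 y.
Proof. induction l1; simpl; [lra|]. unfold mult in *; simpl; rewrite IHl1; lra. Qed.

Fixpoint rep (n : nat) (l : runion) : runion :=
  match n with O => nil | S k => l ++ rep k l end.

Lemma mult_rep n l y : mult (rep n l) y = INR n * mult l y.
Proof.
  induction n; simpl rep. simpl; unfold mult; simpl; lra.
  rewrite mult_app, IHn, S_INR; lra.
Qed.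

Lemma rep_ok D n l : runion_ok D l -> runion_ok D (rep n l).
Proof.
  intros H; induction n; simpl; [constructor|]. unfold runion_ok in *.
  apply Forall_app; auto.
Qed.

Lemma mult_int Rs y : exists z, mult Rs y = IZR z.
Proof.
  induction Rs as [|r Rs IH]. exists 0%Z; reflexivity.
  destruct IH as [z Hz]. unfold mult in *; simpl. rewrite Hz.
  unfold m_rect.
  destruct (pt_eq_dec _ _). exists (1 + z)%Z; rewrite plus_IZR; reflexivity.
  destruct (pt_eq_dec _ _). exists (1 + z)%Z; rewrite plus_IZR; reflexivity.
  destruct (pt_eq_dec _ _). exists (-1 + z)%Z; rewrite plus_IZR; reflexivity.
  destruct (pt_eq_dec _ _). exists (-1 + z)%Z; rewrite plus_IZR; reflexivity.
  exists z; lra.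
Qed.

Lemma support Rs y : mult Rs y <> 0 -> In y (all_corners Rs).
Proof.
  intros H. unfold all_corners. apply nodup_In.
  induction Rs as [|r Rs IH]. unfold mult in H; simpl in H; lra.
  change (In y (corners r ++ flat_map corners Rs)). apply in_or_app. unfold mult in H; simpl in H.
  destruct (Req_EM_T (m_rect r y) 0) as [E|E].
  - right; apply IH; unfold mult; lra.
  - left. unfold m_rect in E. unfold corners.
    destruct (pt_eq_dec _ _); [simpl; auto|].
    destruct (pt_eq_dec _ _); [simpl; auto|].
    destruct (pt_eq_dec _ _); [simpl; auto|].
    destruct (pt_eq_dec _ _); [simpl; auto|]. lra.
Qed.

Lemma corners_D D Rs y : runion_ok D Rs -> In y (all_corners Rs) -> D y.
Proof.
  unfold all_corners; intros H Hy. apply nodup_In in Hy.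
  apply in_flat_map in Hy. destruct Hy as [r [Hr Hy]].
  unfold runion_ok in H. rewrite Forall_forall in H. specialize (H r Hr).
  destruct H as [_ [_ [H1 [H2 [H3 H4]]]]].
  simpl in Hy; destruct Hy as [<-|[<-|[<-|[<-|[]]]]]; auto.
Qed.

Lemma NoDup_remove' (l : list pt) a : NoDup l -> NoDup (remove pt_eq_dec a l).
Proof.
  induction 1; simpl. constructor.
  destruct (pt_eq_dec a x); auto. constructor; auto.
  intros Hin; apply in_remove in Hin; tauto.
Qed.

Lemma sum_zero f l : (forall y, In y l -> f y = 0) -> sumL f l = 0.
Proof.
  induction l; simpl; intros H; auto. rewrite H, IHl; auto. lra.
Qed.

Lemma sum_remove f l a : NoDup l -> In a l ->
  sumL f l = f a + sumL f (remove pt_eq_dec a l).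
Proof.
  induction 1; simpl; intros Ha; [contradiction|].
  destruct (pt_eq_dec a x).
  - subst. rewrite notin_remove; auto.
  - destruct Ha as [->|Ha]; [congruence|]. simpl. rewrite IHNoDup; auto. lra.
Qed.

Lemma sum_support f l1 l2 : NoDup l1 -> NoDup l2 -> incl l1 l2 ->
  (forall y, In y l2 -> ~ In y l1 -> f y = 0) -> sumL f l1 = sumL f l2.
Proof.
  intros H1; revert l2; induction H1 as [|a l1 Ha H1 IH]; intros l2 H2 Hi Hz.
  - simpl. symmetry; apply sum_zero; intros y Hy; apply Hz; auto.
  - simpl. rewrite (sum_remove f l2 a H2) by (apply Hi; simpl; auto).
    f_equal. apply IH.
    + apply NoDup_remove'; auto.
    + intros y Hy. apply in_in_remove. intros ->; contradiction.
      apply Hi; simpl; auto.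
    + intros y Hy Hn. apply in_remove in Hy. destruct Hy as [Hy Hne].
      apply Hz; auto. simpl; intros [->|?]; auto.
Qed.

Lemma sum_le f g l : (forall y, In y l -> f y <= g y) -> sumL f l <= sumL g l.
Proof.
  induction l; simpl; intros H; [lra|]. pose proof (H a (or_introl eq_refl)).
  assert (sumL f l <= sumL g l) by (apply IHl; auto). lra.
Qed.

Lemma sum_lin f g k1 k2 l :
  sumL (fun y => k1 * f y + k2 * g y) l = k1 * sumL f l + k2 * sumL g l.
Proof. induction l; simpl; [lra|]. rewrite IHl; lra. Qed.

Lemma sum_minus f g l : sumL (fun y => f y - g y) l = sumL f l - sumL g l.
Proof. induction l; simpl; [lra|]. rewrite IHl; lra. Qed.

Lemma sum_ind (x : pt) c l : NoDup l -> In x l ->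
  sumL (fun y => if pt_eq_dec y x then c else 0) l = c.
Proof.
  intros H Hx. rewrite (sum_remove _ l x H Hx).
  rewrite sum_zero. destruct (pt_eq_dec x x); [lra|congruence].
  intros y Hy. apply in_remove in Hy. destruct (pt_eq_dec y x); tauto.
Qed.

Lemma all_corners_NoDup Rs : NoDup (all_corners Rs).
Proof. apply NoDup_nodup. Qed.

Lemma incl_l R1 R2 y : In y (all_corners R1) -> In y (all_corners (R1 ++ R2)).
Proof.
  unfold all_corners; intros H; apply nodup_In; apply nodup_In in H.
  rewrite flat_map_app; apply in_or_app; auto.
Qed.
Lemma incl_r R1 R2 y : In y (all_corners R2) -> In y (all_corners (R1 ++ R2)).
Proof.
  unfold all_corners; intros H; apply nodup_In; apply nodup_In in H.
  rewrite flat_map_app; apply in_or_app; auto.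
Qed.

Lemma L_on A B Rs U : NoDup U -> incl (all_corners Rs) U ->
  L A B Rs = sumL (Lterm A B Rs) U.
Proof.
  intros HU Hi. unfold L. apply sum_support; auto. apply all_corners_NoDup.
  intros y _ Hn. rewrite Lterm_phi.
  destruct (Req_EM_T (mult Rs y) 0) as [E|E].
  rewrite E; apply phi_zero. exfalso; apply Hn, support; auto.
Qed.

Lemma key D A B (Q1 : forall y, D y -> A y <= B y)
  (Q2 : forall Rs : runion, runion_ok D Rs -> 0 <= L A B Rs) x R1 R2 :
  runion_ok D R1 -> 0 < mult R1 x -> runion_ok D R2 -> mult R2 x < 0 ->
  B x - A x <= L A B R1 / mult R1 x + L A B R2 / (- mult R2 x).
Proof.
  intros Ok1 H1 Ok2 H2.
  destruct (mult_int R1 x) as [z1 E1]. destruct (mult_int R2 x) as [z2 E2].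
  set (a := Z.to_nat z1). set (b := Z.to_nat (- z2)).
  assert (Ea : INR a = mult R1 x).
  { unfold a. rewrite INR_IZR_INZ, Z2Nat.id, E1; auto.
    rewrite E1 in H1; apply lt_IZR in H1; lia. }
  assert (Eb : INR b = - mult R2 x).
  { unfold b. rewrite INR_IZR_INZ, Z2Nat.id, E2, opp_IZR; auto.
    rewrite E2 in H2; apply lt_IZR in H2; lia. }
  set (m1 := mult R1 x) in *. set (m2 := mult R2 x) in *.
  set (Rs := rep b R1 ++ rep a R2).
  assert (OkR : runion_ok D Rs).
  { unfold Rs, runion_ok; apply Forall_app; split; apply rep_ok; auto. }
  assert (Ha1 : (1 <= a)%nat). { apply (INR_lt 0). rewrite Ea. simpl INR. lra. }
  assert (Hb1 : (1 <= b)%nat). { apply (INR_lt 0). rewrite Eb. simpl INR. lra. }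
  set (U := all_corners Rs).
  assert (NU : NoDup U) by apply all_corners_NoDup.
  assert (I1 : incl (all_corners R1) U).
  { intros y Hy. unfold U, Rs. apply incl_l. destruct b; [lia|]. simpl. apply incl_l; auto. }
  assert (I2 : incl (all_corners R2) U).
  { intros y Hy. unfold U, Rs. apply incl_r. destruct a; [lia|]. simpl. apply incl_l; auto. }
  assert (Hx : In x U). { apply I1, support. fold m1. lra. }
  pose proof (Q2 Rs OkR) as HL.
  rewrite (L_on A B Rs U NU) in HL by (intros y Hy; exact Hy).
  rewrite (L_on A B R1 U NU I1), (L_on A B R2 U NU I2).
  set (c := INR a * INR b * (B x - A x)).
  assert (Hle : sumL (Lterm A B Rs) U <=
    sumL (fun y => (INR b * Lterm A B R1 y + INR a * Lterm A B R2 y)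
                   - (if pt_eq_dec y x then c else 0)) U).
  { apply sum_le. intros y Hy. rewrite !Lterm_phi.
    assert (Em : mult Rs y = INR b * mult R1 y + INR a * mult R2 y).
    { unfold Rs; rewrite mult_app, !mult_rep; lra. }
    rewrite Em. destruct (pt_eq_dec y x) as [->|Hne].
    - fold m1 m2. rewrite Eb, Ea.
      replace (- m2 * m1 + m1 * m2) with 0 by ring. rewrite phi_zero.
      unfold phi. destruct (Rlt_dec 0 m1); [|lra].
      destruct (Rlt_dec 0 m2); [lra|]. destruct (Rlt_dec m2 0); [|lra].
      unfold c; rewrite Ea, Eb; lra.
    - rewrite <- !phi_scale by apply pos_INR.
      pose proof (phi_sub (A y) (B y) (INR b * mult R1 y) (INR a * mult R2 y)
                    (Q1 y (corners_D D Rs y OkR Hy))). lra. }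
  rewrite sum_minus, sum_lin, sum_ind in Hle; auto.
  unfold c in Hle. rewrite Ea, Eb in Hle.
  set (L1 := sumL (Lterm A B R1) U) in *. set (L2 := sumL (Lterm A B R2) U) in *.
  assert (Hab : 0 < m1 * (- m2)) by nra.
  apply Rmult_le_reg_r with (r := m1 * (- m2)); auto.
  replace ((L1 / m1 + L2 / - m2) * (m1 * - m2)) with (- m2 * L1 + m1 * L2)
    by (field; lra).
  lra.
Qed.

Lemma inf_exists (S : R -> Prop) : exists l, is_inf S l.
Proof.
  destruct (classic (exists x, S x)) as [Hne|He].
  - destruct (classic (exists r, forall x, S x -> r <= x)) as [[r Hr]|Hnb].
    + set (E := fun y => S (- y)).
      assert (bE : bound E). { exists (- r). intros y Hy. apply Hr in Hy. lra. }
      assert (nE : exists y, E y). { destruct Hne as [x Hx]. exists (- x). unfold E. rewrite Ropp_involutive; auto. }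
      destruct (completeness E bE nE) as [m [Hub Hlub]].
      exists (Fin (- m)). split.
      * intros x Hx. simpl. assert (E (- x)) by (unfold E; rewrite Ropp_involutive; auto).
        apply Hub in H. lra.
      * intros l' Hl'. destruct l' as [q| |]; simpl; auto.
        -- assert (m <= - q). { apply Hlub. intros y Hy. apply Hl' in Hy. simpl in Hy. lra. }
           lra.
        -- destruct Hne as [x Hx]. apply Hl' in Hx. simpl in Hx. contradiction.
    + exists MInf. split. intros; simpl; auto.
      intros l' Hl'. destruct l' as [q| |]; simpl; auto.
      * apply Hnb. exists q. intros x Hx. apply Hl' in Hx. exact Hx.
      * destruct Hne as [x Hx]. apply Hl' in Hx. exact Hx.
  - exists PInf. split. intros x Hx. exfalso; eauto.
    intros l' _. destruct l'; simpl; auto.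
Qed.

Lemma Inf_spec S : is_inf S (Inf S).
Proof.
  unfold Inf. apply epsilon_spec. apply inf_exists.
Qed.

Lemma inf_empty S : (forall x, ~ S x) -> Inf S = PInf.
Proof.
  intros H. destruct (Inf_spec S) as [_ H2].
  assert (Rbar_le PInf (Inf S)) by (apply H2; intros x Hx; exfalso; eapply H; eauto).
  destruct (Inf S); simpl in *; tauto.
Qed.

Lemma combine (SM SO : R -> Prop) c :
  (forall u v, SM u -> SO v -> c <= u + v) ->
  Rbar_le (Fin c) (Rbar_plus (Inf SM) (Inf SO)).
Proof.
  intros Hk.
  destruct (classic (exists u, SM u)) as [[u Hu]|HM].
  2:{ rewrite inf_empty by (intros x Hx; apply HM; eauto). simpl; auto. }
  destruct (classic (exists v, SO v)) as [[v Hv]|HO].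
  2:{ rewrite (inf_empty SO) by (intros x Hx; apply HO; eauto).
      destruct (Inf SM); simpl; auto. }
  destruct (Inf_spec SM) as [M1 M2]. destruct (Inf_spec SO) as [O1 O2].
  assert (HpM : Rbar_le (Fin (c - v)) (Inf SM)).
  { apply M2. intros x Hx. simpl. pose proof (Hk x v Hx Hv). lra. }
  destruct (Inf SM) as [p| |] eqn:EM; simpl in HpM; try contradiction.
  2:{ simpl; auto. }
  assert (HpO : Rbar_le (Fin (c - p)) (Inf SO)).
  { apply O2. intros v' Hv'. simpl.
    assert (Rbar_le (Fin (c - v')) (Fin p)).
    { apply M2. intros x Hx. simpl. pose proof (Hk x v' Hx Hv'). lra. }
    simpl in H. lra. }
  destruct (Inf SO) as [q| |]; simpl in *; auto; lra.
Qed.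

Theorem mainTheorem12 (D : pt -> Prop) (A B : pt -> R)
  (hD : square_or_mesh D)
  (Q1 : forall y, D y -> A y <= B y)
  (Q2 : forall Rs : runion, runion_ok D Rs -> 0 <= L A B Rs) :
  forall x : pt, D x ->
    Rbar_le (Fin (B x - A x)) (Rbar_plus (P_M D A B x) (P_O D A B x)).
Proof.
  intros x Dx. unfold P_M, P_O. apply combine.
  intros u v [R1 [Ok1 [H1 ->]]] [R2 [Ok2 [H2 ->]]].
  eapply key; eauto.
Qed.
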